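(* Let $T\ge 2$, $U$ a finite set of men and $W_1\subseteq\cdots\subseteq W_T$ finite sets of women, each man having a strict total order over $W_T$ and each woman a strict total order over $U$. Then there is an optimal solution $(M_1,\dots,M_T)$ of $T$-A-SMP on this instance in which $M_1$ is the men-optimal stable matching of $(U,W_1)$.
   Context: $T$-A-SMP: compute matchings $M_1,\dots,M_T$ with $M_t$ stable for $(U,W_t)$ (preferences restricted) minimizing $\sum_{t=1}^{T-1}|M_t\setminus M_{t+1}|$. A matching is a set of man–woman pairs with each person in at most one pair; a blocking pair of $M$ is a pair $(u,w)\notin M$ with ($u$ unmatched or preferring $w$ to his partner) and ($w$ unmatched or preferring $u$ to her partner); stable means no blocking pair. The men-optimal stable matching gives every man his most preferred partner among those he has in some stable matching. *)

(* Defs.v *)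
From mathcomp Require Import all_boot.
Set Implicit Arguments. Unset Strict Implicit. Unset Printing Implicit Defensive.

Definition strict_total_order (X : eqType) (r : rel X) : Prop :=
  [/\ irreflexive r, transitive r & forall x y, x != y -> r x y || r y x].

Section SM.
Variables (U W : finType) (prefM : U -> rel W) (prefW : W -> rel U).
(* prefM u w w' : man u strictly prefers w to w';
   prefW w u u' : woman w strictly prefers u to u' *)

Definition is_matching (A : {set W}) (M : {set U * W}) : Prop :=
  [/\ forall p, p \in M -> p.2 \in A,
      forall p q, p \in M -> q \in M -> p.1 = q.1 -> p = q
    & forall p q, p \in M -> q \in M -> p.2 = q.2 -> p = q].

Definition blocking (A : {set W}) (M : {set U * W}) (u : U) (w : W) : Prop :=
  [/\ w \in A, (u, w) \notin M,
      (forall w', (u, w') \in M -> prefM u w w')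
    &
      (forall u', (u', w) \in M -> prefW w u u')].

Definition stable (A : {set W}) (M : {set U * W}) : Prop :=
  is_matching A M /\ forall u w, ~ blocking A M u w.

Definition men_optimal (A : {set W}) (M : {set U * W}) : Prop :=
  stable A M /\
  forall M', stable A M' -> forall u w', (u, w') \in M' ->
    exists2 w, (u, w) \in M & (w = w' \/ prefM u w w').

Definition feasible (T : nat) (Ws : nat -> {set W}) (Ms : nat -> {set U * W}) : Prop :=
  forall t, 1 <= t <= T -> stable (Ws t) (Ms t).

Definition cost (T : nat) (Ms : nat -> {set U * W}) : nat :=
  \sum_(1 <= t < T) #|Ms t :\: Ms t.+1|.

Definition optimal (T : nat) (Ws : nat -> {set W}) (Ms : nat -> {set U * W}) : Prop :=
  feasible T Ws Ms /\
  forall Ms', feasible T Ws Ms' -> cost T Ms <= cost T Ms'.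
End SM.

(* Main.v *)
Require Import Defs.
From mathcomp Require Import all_boot.
From Stdlib Require Import Classical ClassicalEpsilon.
Set Implicit Arguments. Unset Strict Implicit. Unset Printing Implicit Defensive.

Lemma best_ex (X : finType) (r : rel X) (P : pred X) x0 :
  strict_total_order r -> P x0 ->
  exists m, P m /\ forall y, P y -> (y == m) || r m y.
Proof.
case=> irr tr tot Px0.
pose F x := #|[set y | r x y]|.
case: (arg_maxnP F Px0) => m Pm Hm.
exists m; split=> // y Py.
case: eqP => //= ne.
have nmy : m != y by apply/eqP=> e; apply: ne; rewrite e.
case/orP: (tot _ _ nmy) => // ryM.
have: [set z | r m z] \proper [set z | r y z].
  apply/properP; split.
    by apply/subsetP => z; rewrite !inE => h; exact: (tr m y z ryM h).
  by exists m; rewrite !inE ?irr ?ryM.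
move/proper_card; rewrite ltnNge.
by have -> : #|[set z | r y z]| <= #|[set z | r m z]| by exact: Hm.
Qed.

Section Proof.
Variables (U W : finType) (prefM : U -> rel W) (prefW : W -> rel U).
Hypothesis HM : forall u, strict_total_order (prefM u).
Hypothesis HW : forall w, strict_total_order (prefW w).

Lemma irrM u w : prefM u w w = false. Proof. by case: (HM u) => h _ _; apply: h. Qed.
Lemma trM u a b c : prefM u a b -> prefM u b c -> prefM u a c.
Proof. by case: (HM u) => _ h _; exact: h. Qed.
Lemma totM u a b : a != b -> prefM u a b || prefM u b a.
Proof. by case: (HM u) => _ _ h; apply: h. Qed.
Lemma asymM u a b : prefM u a b -> prefM u b a -> False.
Proof. by move=> h1 h2; move: (trM h1 h2); rewrite irrM. Qed.
Lemma irrW u w : prefW w u u = false. Proof. by case: (HW w) => h _ _; apply: h. Qed.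
Lemma trW w a b c : prefW w a b -> prefW w b c -> prefW w a c.
Proof. by case: (HW w) => _ h _; exact: h. Qed.
Lemma totW w a b : a != b -> prefW w a b || prefW w b a.
Proof. by case: (HW w) => _ _ h; apply: h. Qed.
Lemma asymW w a b : prefW w a b -> prefW w b a -> False.
Proof. by move=> h1 h2; move: (trW h1 h2); rewrite irrW. Qed.

Definition wb u a b := (a == b) || prefM u a b.
Lemma wb_trans u a b c : wb u a b -> wb u b c -> wb u a c.
Proof.
rewrite /wb => /orP[/eqP->//|h1] /orP[/eqP<-|h2]; first by rewrite h1 orbT.
by rewrite (trM h1 h2) orbT.
Qed.
Lemma wb_asym u a b : wb u a b -> wb u b a -> a = b.
Proof.
rewrite /wb => /orP[/eqP->//|h1] /orP[/eqP->//|h2]; case: (asymM h1 h2).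
Qed.

Lemma mU (A : {set W}) (M : {set U * W}) u w w' : is_matching A M -> (u,w) \in M -> (u,w') \in M -> w = w'.
Proof. by case=> _ h _ h1 h2; case: (h _ _ h1 h2 erefl). Qed.
Lemma mW (A : {set W}) (M : {set U * W}) u u' w : is_matching A M -> (u,w) \in M -> (u',w) \in M -> u = u'.
Proof. by case=> _ _ h h1 h2; case: (h _ _ h1 h2 erefl). Qed.
Lemma mA (A : {set W}) (M : {set U * W}) u w : is_matching A M -> (u,w) \in M -> w \in A.
Proof. by case=> h _ _ h1; exact: (h _ h1). Qed.

Lemma card_fst (A : {set W}) (M : {set U * W}) (S : {set U * W}) : is_matching A M -> S \subset M ->
  #|[set p.1 | p in S]| = #|S|.
Proof.
move=> [_ h _] sS; apply: card_in_imset => p q pS qS; apply: h; exact: (subsetP sS).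
Qed.
Lemma card_snd (A : {set W}) (M : {set U * W}) (S : {set U * W}) : is_matching A M -> S \subset M ->
  #|[set p.2 | p in S]| = #|S|.
Proof.
move=> [_ _ h] sS; apply: card_in_imset => p q pS qS; apply: h; exact: (subsetP sS).
Qed.

Notation stable := (stable prefM prefW).
Implicit Types (M N : {set U * W}) (A B : {set W}).

Lemma nonblock B N u w : stable B N -> w \in B -> (u,w) \notin N ->
  (forall x, (u,x) \in N -> prefM u w x) -> exists2 v, (v,w) \in N & prefW w v u.
Proof.
move=> [mN sN] wB uwN hx.
case: (classic (exists2 v, (v,w) \in N & prefW w v u)) => // nH.
exfalso; apply: (sN u w); split=> // u' u'w.
have ne : u != u' by apply/eqP=> e; rewrite e u'w in uwN.
case/orP: (totW w ne) => // h; case: nH; by exists u'.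
Qed.

Lemma pref_wb u a b c : prefM u a b -> wb u b c -> prefM u a c.
Proof. by move=> h /orP[/eqP<-//|h2]; exact: trM h h2. Qed.

Definition join (M N : {set U * W}) : {set U * W} :=
  [set p : U * W | ((p \in M) && [forall x, ((p.1,x) \in N) ==> wb p.1 p.2 x])
                || ((p \in N) && [forall x, ((p.1,x) \in M) ==> wb p.1 p.2 x])].

Lemma joinC M N : join M N = join N M.
Proof. by apply/setP => p; rewrite !inE orbC. Qed.

Definition dom (M N : {set U*W}) :=
  forall u x, (u,x) \in N -> exists2 y, (u,y) \in M & wb u y x.

Lemma inJM M N u w : (u,w) \in M -> (forall x, (u,x) \in N -> wb u w x) -> (u,w) \in join M N.
Proof.
move=> h f; rewrite inE /= h /=; apply/orP; left; apply/forallP=> x; apply/implyP; exact: f.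
Qed.
Lemma inJN M N u w : (u,w) \in N -> (forall x, (u,x) \in M -> wb u w x) -> (u,w) \in join M N.
Proof. by move=> h f; rewrite joinC; apply: inJM. Qed.
Lemma Jcases M N u w : (u,w) \in join M N ->
  ((u,w) \in M /\ forall x, (u,x) \in N -> wb u w x) \/
  ((u,w) \in N /\ forall x, (u,x) \in M -> wb u w x).
Proof.
rewrite inE /= => /orP[/andP[h /forallP f]|/andP[h /forallP f]].
  by left; split=> // x; apply/implyP; exact: f.
by right; split=> // x; apply/implyP; exact: f.
Qed.

Lemma join_domr (A B : {set W}) M N : is_matching A M -> is_matching B N -> dom (join M N) N.
Proof.
move=> mM mN u x ux.
case: (boolP [exists z, ((u,z) \in M) && prefM u z x]).
  case/existsP=> z /andP[uz pz]; exists z; last by rewrite /wb pz orbT.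
  apply: inJM => // x' ux'.
  by rewrite -(mU mN ux ux') /wb pz orbT.
rewrite negb_exists => /forallP nz; exists x; last by rewrite /wb eqxx.
apply: inJN => // z uz.
rewrite /wb; case: eqP => //= /eqP ne.
case/orP: (totM u ne) => // h; move: (nz z); by rewrite uz h.
Qed.

Lemma join_doml (A B : {set W}) M N : is_matching A M -> is_matching B N -> dom (join M N) M.
Proof. by move=> mM mN; rewrite joinC; apply: (join_domr mN mM). Qed.

Lemma strictify (A : {set W}) (N : {set U * W}) u w : is_matching A N ->
  (forall x, (u,x) \in N -> wb u w x) -> (u,w) \notin N -> forall x, (u,x) \in N -> prefM u w x.
Proof.
move=> mN f nN x ux; case/orP: (f x ux) => // /eqP e; by rewrite e ux in nN.
Qed.

Lemma cross A B M N u u' w : A \subset B -> stable A M -> stable B N ->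
  (u,w) \in M -> (forall x, (u,x) \in N -> wb u w x) ->
  (u',w) \in N -> (forall x, (u',x) \in M -> wb u' w x) -> u = u'.
Proof.
move=> AB [mM sM] [mN sN] h fw h' fw'.
case: (eqVneq u u') => // ne; exfalso.
have uwN : (u,w) \notin N by apply/negP=> h2; move: ne; rewrite (mW mN h2 h') eqxx.
have u'wM : (u',w) \notin M by apply/negP=> h2; move: ne; rewrite (mW mM h h2) eqxx.
have wA := mA mM h.
case: (nonblock (conj mN sN) (subsetP AB _ wA) uwN (strictify mN fw uwN)) => v vN pv.
case: (nonblock (conj mM sM) wA u'wM (strictify mM fw' u'wM)) => v' vM pv'.
rewrite (mW mM vM h) in pv'.
rewrite (mW mN vN h') in pv.
exact: asymW pv pv'.
Qed.

Lemma join_matching A B M N : A \subset B -> stable A M -> stable B N ->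
  is_matching B (join M N).
Proof.
move=> AB sM sN; have [mM _] := sM; have [mN _] := sN.
split.
- move=> [u w] /Jcases [[h _]|[h _]] /=.
    exact: (subsetP AB _ (mA mM h)).
  exact: (mA mN h).
- move=> [u w] [u' w'] hJ hJ' /= e; subst u'.
  case: (Jcases hJ) (Jcases hJ') => [[h fw]|[h fw]] [[h' fw']|[h' fw']].
  + by rewrite (mU mM h h').
  + by rewrite (wb_asym (fw _ h') (fw' _ h)).
  + by rewrite (wb_asym (fw _ h') (fw' _ h)).
  + by rewrite (mU mN h h').
- move=> [u w] [u' w'] hJ hJ' /= e; subst w'.
  case: (Jcases hJ) (Jcases hJ') => [[h fw]|[h fw]] [[h' fw']|[h' fw']].
  + by rewrite (mW mM h h').
  + by rewrite (cross AB sM sN h fw h' fw').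
  + by rewrite (cross AB sM sN h' fw' h fw).
  + by rewrite (mW mN h h').
Qed.

Lemma join_stable A B M N : A \subset B -> stable A M -> stable B N -> stable B (join M N).
Proof.
move=> AB sM sN; split; first exact: join_matching AB sM sN.
have [mM sM'] := sM; have [mN sN'] := sN.
move=> u w [wB uwJ bu bw].
have hN : forall x, (u,x) \in N -> prefM u w x.
  move=> x ux; case: (join_domr mM mN ux) => y uy wy; exact: pref_wb (bu _ uy) wy.
have hM : forall x, (u,x) \in M -> prefM u w x.
  move=> x ux; case: (join_doml mM mN ux) => y uy wy; exact: pref_wb (bu _ uy) wy.
have uwN : (u,w) \notin N by apply/negP=> h; move: (hN _ h); rewrite irrM.
have uwM : (u,w) \notin M by apply/negP=> h; move: (hM _ h); rewrite irrM.
pose UM := [set x | [exists z, ((x,z) \in M) && [forall y, ((x,y) \in N) ==> prefM x z y]]].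
pose PM := [set p in M | p.1 \in UM].
pose WM := [set p.2 | p in PM].
pose PN := [set p in N | p.2 \in WM].
have F1 : forall w', w' \in WM -> exists2 z, z \in UM & (z,w') \in N.
  move=> w' /imsetP[[u0 w0] /=]; rewrite inE /= => /andP[u0M u0U] ->{w'}.
  move: (u0U); rewrite inE => /existsP[z0 /andP[u0z0 /forallP f0]].
  rewrite -(mU mM u0M u0z0) in f0.
  have u0N : (u0,w0) \notin N by apply/negP=> h; move: (implyP (f0 w0) h); rewrite irrM.
  have w0A := mA mM u0M.
  case: (nonblock sN (subsetP AB _ w0A) u0N (fun x h => implyP (f0 x) h)) => z zN pz.
  exists z => //.
  case: (boolP (z \in UM)) => // zU; exfalso.
  have zM : (z,w0) \notin M by apply/negP=> h; move: pz; rewrite (mW mM h u0M) irrW.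
  apply: (sM' z w0); split=> //.
    move=> y zy; have ne : w0 != y by apply/eqP=> e; rewrite e zy in zM.
    case/orP: (totM z ne) => // h; move/negP: zU; case; rewrite inE; apply/existsP; exists y.
    rewrite zy /=; apply/forallP => x; apply/implyP => zx; by rewrite -(mU mN zN zx).
  by move=> u' u'M; rewrite (mW mM u'M u0M).
have sub1 : [set p.1 | p in PN] \subset UM.
  apply/subsetP=> x /imsetP[[x1 x2] /=]; rewrite inE /= => /andP[h1 h2] ->.
  case: (F1 _ h2) => z zU zN; by rewrite (mW mN h1 zN).
have eUM : [set p.1 | p in PM] = UM.
  apply/setP=> x; apply/imsetP/idP.
    by case=> [[x1 x2]]; rewrite inE /= => /andP[_ h] ->.
  move=> xU; move: (xU); rewrite inE => /existsP[z /andP[xz _]].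
  by exists (x,z); rewrite // inE xz xU.
have eWM : [set p.2 | p in PN] = WM.
  apply/setP=> x; apply/imsetP/idP.
    by case=> [[x1 x2]]; rewrite inE /= => /andP[_ h] ->.
  move=> xW; case: (F1 _ xW) => z _ zN; by exists (z,x); rewrite // inE zN xW.
have PMsub : PM \subset M by apply/subsetP=> p; rewrite inE => /andP[].
have PNsub : PN \subset N by apply/subsetP=> p; rewrite inE => /andP[].
have eq1 : [set p.1 | p in PN] = UM.
  apply/eqP; rewrite eqEcard sub1 /=.
  rewrite (card_fst mN PNsub) -(card_snd mN PNsub) eWM -eUM (card_fst mM PMsub).
  by rewrite -(card_snd mM PMsub).
case: (nonblock sN wB uwN hN) => v vN pv.
case: (boolP ((v,w) \in join M N)) => vJ.
  by move: (bw _ vJ) => h; case: (asymW h pv).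
have vU : v \in UM.
  rewrite inE; apply/existsP.
  case: (boolP [exists z, ((v,z) \in M) && prefM v z w]).
    case/existsP=> z /andP[vz pz]; exists z; rewrite vz /=; apply/forallP=> x; apply/implyP=> vx.
    by rewrite -(mU mN vN vx).
  rewrite negb_exists => /forallP nz; exfalso; move/negP: vJ; apply.
  apply: inJN => // z vz; rewrite /wb; case: eqP => //= /eqP ne.
  case/orP: (totM v ne) => // h; move: (nz z); by rewrite vz h.
move: vU; rewrite -eq1 => /imsetP[[x1 x2] /=]; rewrite inE /= => /andP[h1 h2] e; subst x1.
rewrite -(mU mN vN h1) in h2.
case/imsetP: h2 => [[u0 w0]] /=; rewrite inE /= => /andP[u0M u0U] e; subst w0.
have u0J : (u0,w) \in join M N.
  apply: inJM => // x u0x.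
  move: u0U; rewrite inE => /existsP[z /andP[u0z /forallP f]].
  by rewrite (mU mM u0M u0z) /wb (implyP (f x) u0x) orbT.
have p1 := bw _ u0J.
case: (nonblock sM (mA mM u0M) uwM hM) => v' v'M pv'.
rewrite (mW mM v'M u0M) in pv'; exact: asymW p1 pv'.
Qed.

Lemma rh A M N : stable A M -> stable A N -> dom M N ->
  forall u w, (u,w) \in M -> exists x, (u,x) \in N.
Proof.
move=> sM sN dMN; have [mM _] := sM; have [mN _] := sN.
have snd_sub : [set p.2 | p in M] \subset [set p.2 | p in N].
  apply/subsetP=> y /imsetP[[u w] h /= ->{y}].
  case: (boolP ((u,w) \in N)) => uwN; first by apply/imsetP; exists (u,w).
  have hx : forall x, (u,x) \in N -> prefM u w x.
    move=> x ux; case: (dMN _ _ ux) => y uy; rewrite -(mU mM h uy) /wb.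
    case/orP => // /eqP e; by rewrite e ux in uwN.
  case: (nonblock sN (mA mM h) uwN hx) => v vN _; by apply/imsetP; exists (v,w).
have fst_sub : [set p.1 | p in N] \subset [set p.1 | p in M].
  apply/subsetP=> y /imsetP[[u x] h /= ->{y}].
  case: (dMN _ _ h) => z uz _; by apply/imsetP; exists (u,z).
have e : [set p.1 | p in N] = [set p.1 | p in M].
  apply/eqP; rewrite eqEcard fst_sub /= (card_fst mM (subxx M)) (card_fst mN (subxx N)).
  rewrite -(card_snd mM (subxx M)) -(card_snd mN (subxx N)); exact: subset_leq_card.
move=> u w h.
have : u \in [set p.1 | p in N] by rewrite e; apply/imsetP; exists (u,w).
by case/imsetP=> [[u' x]] h' /= ->; exists x.
Qed.

Section DA.
Variable A : {set W}.
Definition prop (R : {set U * W}) u : option W :=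
  [pick w | (w \in A) && ((u,w) \notin R) &&
     [forall w', ((w' \in A) && ((u,w') \notin R)) ==> (w' == w) || prefM u w w']].

Lemma propS (R : {set U * W}) u w : prop R u = Some w -> [/\ w \in A, (u,w) \notin R &
  forall w', w' \in A -> (u,w') \notin R -> (w' == w) || prefM u w w'].
Proof.
rewrite /prop; case: pickP => // x /andP[/andP[h1 h2] /forallP h3] [<-]; split=> // w' h4 h5.
by move: (h3 w'); rewrite h4 h5.
Qed.

Lemma propN (R : {set U * W}) u : prop R u = None -> forall w, w \in A -> (u,w) \in R.
Proof.
rewrite /prop; case: pickP => // H _ w wA; apply/negPn/negP => nR.
have Pw : (fun x => (x \in A) && ((u,x) \notin R)) w by rewrite /= wA nR.
case: (@best_ex _ (prefM u) (fun x => (x \in A) && ((u,x) \notin R)) w (HM u) Pw) => m [Pm Hm].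
move: (H m); rewrite Pm /= => /negbT/negP; apply; apply/forallP => w'; apply/implyP => h.
exact: Hm w' h.
Qed.

Lemma prop_ext (R1 R2 : {set U * W}) u : (forall w, ((u,w) \in R1) = ((u,w) \in R2)) -> prop R1 u = prop R2 u.
Proof.
move=> h; rewrite /prop; apply: eq_pick => w /=; rewrite h; congr (_ && _).
by apply: eq_forallb => w'; rewrite h.
Qed.

Definition Rej (R : {set U * W}) := R :|: [set p | (prop R p.1 == Some p.2) &&
   [exists u', (prop R u' == Some p.2) && prefW p.2 u' p.1]].

Definition Inv (R : {set U * W}) := forall u w, (u,w) \in R -> exists2 u', prop R u' = Some w & prefW w u' u.

Lemma inv_rej (R : {set U * W}) : Inv R -> Inv (Rej R).
Proof.
move=> I u w; rewrite in_setU => h.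
have [u1 pu1 p1] : exists2 u1, prop R u1 = Some w & prefW w u1 u.
  case/orP: h => [h|]; first exact: I.
  rewrite inE /= => /andP[_ /existsP[u' /andP[/eqP e p]]]; by exists u'.
have Pu1 : (fun x => prop R x == Some w) u1 by rewrite /= pu1.
case: (@best_ex _ (prefW w) (fun x => prop R x == Some w) u1 (HW w) Pu1) => b [/eqP pb Hb].
have bu : prefW w b u.
  case/orP: (Hb u1 (introT eqP pu1)) => [/eqP<-//|h2]; exact: trW h2 p1.
exists b => //.
rewrite -pb; apply: prop_ext => w'; rewrite in_setU.
apply/idP/idP; last by move=> h2; rewrite h2.
case/orP => //; rewrite inE /= => /andP[/eqP e /existsP[u' /andP[/eqP e' p]]].
rewrite pb in e; case: e => e; subst w'.
case/orP: (Hb u' (introT eqP e')) => [/eqP e2|h2]; first by rewrite e2 irrW in p.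
by case: (asymW h2 p).
Qed.

Lemma da_fix (R : {set U * W}) : Inv R -> Rej R = R -> stable A [set p | prop R p.1 == Some p.2].
Proof.
move=> I e.
have nrej : forall u u' w, prop R u = Some w -> prop R u' = Some w -> prefW w u' u -> False.
  move=> u u' w h h' p.
  have : (u,w) \in Rej R.
    rewrite in_setU; apply/orP; right; rewrite inE /= h eqxx /=; apply/existsP; exists u'.
    by rewrite h' eqxx p.
  rewrite e; case: (propS h) => _ /negP nR _; exact: nR.
split; first split.
- move=> [u w]; rewrite inE /= => /eqP h; by case: (propS h).
- move=> [u w] [u' w']; rewrite !inE /= => /eqP h /eqP h' e'; subst u'.
  by rewrite h in h'; case: h' => ->.
- move=> [u w] [u' w']; rewrite !inE /= => /eqP h /eqP h' e'; subst w'.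
  case: (eqVneq u u') => [->//|ne]; case/orP: (totW w ne) => p.
    by case: (nrej _ _ _ h' h p).
  by case: (nrej _ _ _ h h' p).
- move=> u w [wA uwM bu bw].
  case: (boolP ((u,w) \in R)) => uR.
    case: (I _ _ uR) => u' h p; have := bw u'; rewrite inE /= h eqxx => /(_ isT) p2.
    exact: asymW p p2.
  case e2: (prop R u) => [w0|].
    case: (propS e2) => _ _ hb; case/orP: (hb w wA uR) => [/eqP ew|p].
      by move: uwM; rewrite inE /= e2 ew eqxx.
    have := bu w0; rewrite inE /= e2 eqxx => /(_ isT) p2; exact: asymM p p2.
  by move: uR; rewrite (propN e2 wA).
Qed.

Lemma da_ex_aux n : forall R : {set U * W}, #|~: R| <= n -> Inv R -> exists M, stable A M.
Proof.
elim: n => [|n IH] R hc I; (case: (eqVneq (Rej R) R) => e;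
  [by exists [set p | prop R p.1 == Some p.2]; exact: da_fix|]);
  (have lt : #|~: Rej R| < #|~: R| by
     apply: proper_card; rewrite properC properEneq subsetUl eq_sym e).
  by move: (leq_trans lt hc).
by apply: (IH (Rej R)); [rewrite -ltnS (leq_trans lt hc)|exact: inv_rej].
Qed.

Lemma ex_stable : exists M, stable A M.
Proof. by apply: (@da_ex_aux #|~: (set0 : {set U * W})| set0) => // u w; rewrite inE. Qed.
End DA.

Definition D M := [set p : U*W | [exists w0, ((p.1,w0) \in M) && wb p.1 w0 p.2]].

Lemma mo_aux A n : forall M, stable A M -> #|~: D M| <= n ->
  exists M', men_optimal prefM prefW A M'.
Proof.
elim: n => [|n IH] M sM hc; (case: (classic (men_optimal prefM prefW A M)) => [h|h];
  [by exists M|]);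
 (have [M' [u [w' [sM' uw' nex]]]] : exists M' u w', [/\ stable A M', (u,w') \in M' &
     ~ exists2 w, (u,w) \in M & (w = w' \/ prefM u w w')] by
   apply: NNPP => nh; apply: h; split=> // M' sM' u w' h'; apply: NNPP => nh2; apply: nh;
   by exists M', u, w');
 (have [mM _] := sM; have [mM' _] := sM');
 (have DMJ : D M \proper D (join M' M) by
   apply/properP; split;
   [apply/subsetP => [[x y]]; rewrite !inE /= => /existsP[w0 /andP[xw0 wb0]];
    case: (join_domr mM' mM xw0) => y0 xy0 wb1; apply/existsP; exists y0;
    rewrite xy0 /=; exact: wb_trans wb1 wb0
   |exists (u,w');
    [rewrite inE /=; case: (join_doml mM' mM uw') => y uy wy; apply/existsP; exists y;
     by rewrite uy wy
    |rewrite inE /= negb_exists; apply/forallP => w0; apply/negP => /andP[uw0 /orP[/eqP e|p]];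
     apply: nex; exists w0 => //; [left|right]]]);
 (have lt : #|~: D (join M' M)| < #|~: D M| by apply: proper_card; rewrite properC).
  by move: (leq_trans lt hc).
apply: (IH (join M' M)); first exact: join_stable (subxx A) sM' sM.
by rewrite -ltnS (leq_trans lt hc).
Qed.


Lemma opt_aux T (Ws : nat -> {set W}) n : forall Ms, feasible prefM prefW T Ws Ms ->
  cost T Ms <= n -> exists Ms', optimal prefM prefW T Ws Ms'.
Proof.
elim: n => [|n IH] Ms f hc;
 (case: (classic (exists Ms', feasible prefM prefW T Ws Ms' /\ cost T Ms' < cost T Ms))
   => [[Ms' [f' lt]]|nh];
  [|exists Ms; split=> // Ms' f'; rewrite leqNgt; apply/negP => lt; apply: nh; by exists Ms']).
  by move: (leq_trans lt hc).
by apply: (IH Ms' f'); rewrite -ltnS (leq_trans lt hc).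
Qed.

Fixpoint mp (M1 : {set U * W}) (Ms : nat -> {set U * W}) t :=
  match t with 0 => M1 | t'.+1 => match t' with 0 => M1 | _ => join (mp M1 Ms t') (Ms t) end end.

Lemma main T (Ws : nat -> {set W}) : (forall t, 1 <= t < T -> Ws t \subset Ws t.+1) ->
  exists Ms, optimal prefM prefW T Ws Ms /\ men_optimal prefM prefW (Ws 1) (Ms 1).
Proof.
move=> Hsub.
pose Ms0 t := proj1_sig (constructive_indefinite_description _ (ex_stable (Ws t))).
have f0 : feasible prefM prefW T Ws Ms0.
  move=> t _; exact: (proj2_sig (constructive_indefinite_description _ _)).
have [Ms [fMs oMs]] := opt_aux f0 (leqnn _).
have [M0 sM0] := ex_stable (Ws 1).
have [M1 [sM1 oM1]] := mo_aux sM0 (leqnn _).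
pose Mq := mp M1 Ms.
have cl : forall t, 1 <= t <= T -> stable (Ws t) (Mq t) /\ dom (Mq t) (Ms t).
  elim=> [|t IH] // /andP[_ hT]; case: t IH hT => [|t] IH hT.
    split=> // u x ux; case: (oM1 _ (fMs 1 hT) _ _ ux) => w uw [e|p]; exists w => //.
      by rewrite /wb e eqxx.
    by rewrite /wb p orbT.
  have [sq _] := IH (ltnW hT).
  have sN := fMs t.+2 hT.
  have sJ := join_stable (Hsub t.+1 hT) sq sN.
  split=> //; have [mq _] := sq; have [mN _] := sN; exact: join_domr mq mN.
have cb : forall t, 1 <= t < T -> #|Mq t :\: Mq t.+1| <= #|Ms t :\: Ms t.+1|.
  move=> t /andP[h1 h2].
  have e : Mq t.+1 = join (Mq t) (Ms t.+1) by case: t h1 h2.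
  have r1 : 1 <= t <= T by rewrite h1 ltnW.
  have r2 : 1 <= t.+1 <= T by rewrite h2.
  have [sq dq] := cl t r1.
  have st := fMs t r1.
  have st1 := fMs t.+1 r2.
  have [mq _] := sq; have [mt _] := st; have [mt1 _] := st1.
  rewrite -(card_fst mq (subsetDl _ _)).
  apply: leq_trans (leq_imset_card (fun p : U * W => p.1) _).
  apply: subset_leq_card; apply/subsetP => y /imsetP[[u w] /=]; rewrite inE => /andP[nJ uw] ->{y}.
  case: (rh sq st dq uw) => x ux.
  case: (dq _ _ ux) => y uy; rewrite -(mU mq uw uy) => wbx.
  apply/imsetP; exists (u,x) => //; rewrite inE ux andbT.
  apply/negP => ux1; move: nJ; rewrite e; apply/negP/negPn.
  apply: inJM => // x' ux'; by rewrite -(mU mt1 ux1 ux').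
exists Mq; split; last by split.
split; first by move=> t ht; case: (cl t ht).
move=> Ms' f'; apply: leq_trans (oMs Ms' f').
rewrite /cost big_nat_cond [X in _ <= X]big_nat_cond; apply: leq_sum => t /andP[ht _].
exact: cb.
Qed.

End Proof.

Theorem corollary1 (U W : finType) (prefM : U -> rel W) (prefW : W -> rel U)
  (T : nat) (Ws : nat -> {set W}) :
  2 <= T ->
  (forall u, strict_total_order (prefM u)) ->
  (forall w, strict_total_order (prefW w)) ->
  (forall t, 1 <= t < T -> Ws t \subset Ws t.+1) ->
  Ws T = [set: W] ->
  exists Ms : nat -> {set U * W},
    optimal prefM prefW T Ws Ms /\ men_optimal prefM prefW (Ws 1) (Ms 1).
Proof.
move=> _ HM HW Hsub _; exact: (@main U W prefM prefW HM HW T Ws Hsub).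
Qed.
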